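(* Let $f(X,I)=f_0(I)+f_1(I)X+f_2(I)X^2$ with $f_0,f_1,f_2$ smooth on $[0,\infty)$, and consider the planar system $\dot X=f(X,I)$, $\dot I=(X-1)I$. Let $\beta=(\beta_1,\beta_2)$ be $f$-compatible and let $\mathcal{T}(\beta)$ be the closed triangle in the $(X,I)$-plane with vertices $(\beta_2,0)$, $(\beta_1,0)$, $(0,1)$. Then there exist no periodic solutions, homoclinic loops or oriented phase polygons of this system contained in the interior $\mathcal{T}(\beta)\setminus\partial\mathcal{T}(\beta)$.
   Context: Put $\lambda:=f_0(1)$, $P_f(I):=(f_0(I)-\lambda I)/(1-I)$ (smoothly extended to $I=1$), $h_f(z,I):=P_f(I)+zf_1(I)+z^2(I+(1-I)f_2(I))$. A pair $\beta=(\beta_1,\beta_2)$ with $\beta_1>\beta_2$ is called $f$-compatible if $\beta_2\le\lambda\le\beta_1$ and $h_f(\beta_i,I)/(\beta_j-\beta_i)\ge0$ for all $I\in[0,1]$ and $\{i,j\}=\{1,2\}$. *)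

(* Defs.v *)
From Stdlib Require Import Reals Lra Lia.
From Coquelicot Require Import Coquelicot.
Open Scope R_scope.

(* g is smooth on [0, +oo): it agrees on [0, +oo) with some C^oo function on R
   (Whitney/Seeley sense of smoothness on a closed half-line). *)
Definition smooth_on_nonneg (g : R -> R) : Prop :=
  exists G : R -> R,
    (forall (n : nat) (x : R), ex_derive_n G n x) /\
    (forall x, 0 <= x -> G x = g x).

Definition fXI (f0 f1 f2 : R -> R) (X I : R) : R :=
  f0 I + f1 I * X + f2 I * X ^ 2.

Definition lam (f0 : R -> R) : R := f0 1.

(* P_f(I) := (f0(I) - lambda I)/(1 - I), extended at I = 1 by its (unique
   continuous, in fact smooth) extension, namely lambda - f0'(1). *)
Definition Pf (f0 : R -> R) (I : R) : R :=
  if Req_EM_T I 1 then lam f0 - Derive f0 1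
  else (f0 I - lam f0 * I) / (1 - I).

Definition hf (f0 f1 f2 : R -> R) (z I : R) : R :=
  Pf f0 I + z * f1 I + z ^ 2 * (I + (1 - I) * f2 I).

Definition f_compatible (f0 f1 f2 : R -> R) (b1 b2 : R) : Prop :=
  b1 > b2 /\ b2 <= lam f0 <= b1 /\
  (forall I, 0 <= I <= 1 ->
     hf f0 f1 f2 b1 I / (b2 - b1) >= 0 /\ hf f0 f1 f2 b2 I / (b1 - b2) >= 0).

Definition in_int_T (b1 b2 : R) (P : R * R) : Prop :=
  exists a b c : R, 0 < a /\ 0 < b /\ 0 < c /\ a + b + c = 1 /\
    fst P = a * b2 + b * b1 + c * 0 /\ snd P = a * 0 + b * 0 + c * 1.

Definition is_solution (f0 f1 f2 : R -> R) (x i : R -> R) : Prop :=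
  forall t, is_derive x t (fXI f0 f1 f2 (x t) (i t)) /\
            is_derive i t ((x t - 1) * i t).

Definition is_equilibrium (f0 f1 f2 : R -> R) (P : R * R) : Prop :=
  fXI f0 f1 f2 (fst P) (snd P) = 0 /\ (fst P - 1) * snd P = 0.

Definition periodic_solution_in (f0 f1 f2 : R -> R) (Sset : R * R -> Prop) : Prop :=
  exists (x i : R -> R) (T : R),
    is_solution f0 f1 f2 x i /\ 0 < T /\
    (forall t, x (t + T) = x t /\ i (t + T) = i t) /\
    (exists t, (x t, i t) <> (x 0, i 0)) /\
    (forall t, Sset (x t, i t)).

Definition connects (x i : R -> R) (P Q : R * R) : Prop :=
  is_lim x m_infty (fst P) /\ is_lim i m_infty (snd P) /\
  is_lim x p_infty (fst Q) /\ is_lim i p_infty (snd Q).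

Definition homoclinic_loop_in (f0 f1 f2 : R -> R) (Sset : R * R -> Prop) : Prop :=
  exists (P : R * R) (x i : R -> R),
    is_equilibrium f0 f1 f2 P /\ is_solution f0 f1 f2 x i /\
    connects x i P P /\ (exists t, (x t, i t) <> P) /\
    Sset P /\ (forall t, Sset (x t, i t)).

Definition oriented_phase_polygon_in (f0 f1 f2 : R -> R) (Sset : R * R -> Prop) : Prop :=
  exists (n : nat) (p : nat -> R * R) (xs is_ : nat -> R -> R),
    (1 <= n)%nat /\ p n = p 0%nat /\
    (forall j k, (j < n)%nat -> (k < n)%nat -> p j = p k -> j = k) /\
    (forall k, (k < n)%nat ->
       is_equilibrium f0 f1 f2 (p k) /\ Sset (p k) /\
       is_solution f0 f1 f2 (xs k) (is_ k) /\
       connects (xs k) (is_ k) (p k) (p (S k)) /\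
       (exists t, (xs k t, is_ k t) <> p k) /\
       (forall t, Sset (xs k t, is_ k t))).

(* Main.v *)
Require Import Defs.
From Stdlib Require Import Reals Lra Lia ZArith.
From Coquelicot Require Import Coquelicot.
Open Scope R_scope.

Definition Ac (b1 b2 I : R) : R := (b1 - / (1 - I)) / (b1 - b2).
Definition dAc (b1 b2 I : R) : R := - (/ (1 - I) ^ 2) / (b1 - b2).
Definition Lf (b1 b2 X I : R) : R :=
  Ac b1 b2 I * ln (b1 * (1 - I) - X) - Ac b1 b2 I * ln (b1 * (1 - I) - 1)
  + (1 - Ac b1 b2 I) * ln (X - b2 * (1 - I)) - (1 - Ac b1 b2 I) * ln (1 - b2 * (1 - I)).
Definition LI (b1 b2 X I : R) : R :=
  dAc b1 b2 I * (ln (b1 * (1 - I) - X) - ln (b1 * (1 - I) - 1)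
                 - ln (X - b2 * (1 - I)) + ln (1 - b2 * (1 - I)))
  - Ac b1 b2 I * b1 / (b1 * (1 - I) - X) + Ac b1 b2 I * b1 / (b1 * (1 - I) - 1)
  + (1 - Ac b1 b2 I) * b2 / (X - b2 * (1 - I)) - (1 - Ac b1 b2 I) * b2 / (1 - b2 * (1 - I)).
Definition Bv (b1 b2 X I : R) : R := / (I * (X - b1 * (1 - I)) * (X - b2 * (1 - I))).
Definition Dfun (b1 b2 F0 F1 F2 X I : R) : R :=
  Bv b1 b2 X I * (F0 + F1 * X + F2 * X ^ 2) + LI b1 b2 X I - Bv b1 b2 1 I * (F0 + F1 + F2).
Definition dDfun (b1 b2 lam F0 F1 F2 X I : R) : R :=
  let a := b1 * (1 - I) in let b := b2 * (1 - I) in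
  let h1 := (F0 - lam * I) / (1 - I) + b1 * F1 + b1 ^ 2 * (I + (1 - I) * F2) in
  let h2 := (F0 - lam * I) / (1 - I) + b2 * F1 + b2 ^ 2 * (I + (1 - I) * F2) in
  h2 / (I * (b1 - b2) * (X - b) ^ 2) - h1 / (I * (b1 - b2) * (X - a) ^ 2)
  + ((b1 + b2 - 2 * lam) * X + ((b1 + b2) * lam - 2 * b1 * b2) * (1 - I))
     / ((X - a) ^ 2 * (X - b) ^ 2).

Lemma Dfun_deriv b1 b2 lam F0 F1 F2 X I :
  b1 > b2 -> 0 < I < 1 -> b2 * (1 - I) < X < b1 * (1 - I) ->
  b2 * (1 - I) < 1 < b1 * (1 - I) ->
  is_derive (fun X => Dfun b1 b2 F0 F1 F2 X I) X (dDfun b1 b2 lam F0 F1 F2 X I).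
Proof.
  intros Hb HI HX H1.
  unfold Dfun, LI, Bv, Ac, dAc, dDfun.
  assert (I <> 0) by lra. assert (1 - I <> 0) by lra. assert (b1 - b2 <> 0) by lra.
  assert (X - b1 * (1 - I) <> 0) by lra. assert (X - b2 * (1 - I) <> 0) by lra.
  assert (b1 * (1 - I) - X <> 0) by lra.
  auto_derive.
  - repeat split; try lra.
    repeat apply Rmult_integral_contrapositive_currified; lra.
  - unfold Rminus in *. field. repeat split; auto.
Qed.

Lemma dDfun_pos b1 b2 lam F0 F1 F2 X I :
  b1 > b2 -> b2 <= lam <= b1 -> 0 < I < 1 -> b2 * (1 - I) < X < b1 * (1 - I) ->
  ((F0 - lam * I) / (1 - I) + b1 * F1 + b1 ^ 2 * (I + (1 - I) * F2)) / (b2 - b1) >= 0 ->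
  ((F0 - lam * I) / (1 - I) + b2 * F1 + b2 ^ 2 * (I + (1 - I) * F2)) / (b1 - b2) >= 0 ->
  0 < dDfun b1 b2 lam F0 F1 F2 X I.
Proof.
  intros Hb Hl HI HX Hh1 Hh2.
  unfold dDfun; cbv zeta.
  set (h1 := (F0 - lam * I) / (1 - I) + b1 * F1 + b1 ^ 2 * (I + (1 - I) * F2)) in *.
  set (h2 := (F0 - lam * I) / (1 - I) + b2 * F1 + b2 ^ 2 * (I + (1 - I) * F2)) in *.
  set (a := b1 * (1 - I)) in *. set (b := b2 * (1 - I)) in *.
  assert (Ea : 0 < (X - a) ^ 2) by (replace ((X-a)^2) with ((a-X)^2) by ring; apply pow_lt; lra).
  assert (Eb : 0 < (X - b) ^ 2) by (apply pow_lt; lra).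
  assert (T1 : 0 <= h2 / (I * (b1 - b2) * (X - b) ^ 2)).
  { replace (h2 / (I * (b1 - b2) * (X - b) ^ 2)) with ((h2 / (b1 - b2)) * / (I * (X - b) ^ 2))
      by (field; repeat split; lra).
    apply Rmult_le_pos; [lra|]. apply Rlt_le, Rinv_0_lt_compat, Rmult_lt_0_compat; lra. }
  assert (T2 : 0 <= - (h1 / (I * (b1 - b2) * (X - a) ^ 2))).
  { replace (- (h1 / (I * (b1 - b2) * (X - a) ^ 2))) with ((h1 / (b2 - b1)) * / (I * (X - a) ^ 2))
      by (field; repeat split; lra).
    apply Rmult_le_pos; [lra|]. apply Rlt_le, Rinv_0_lt_compat, Rmult_lt_0_compat; lra. }
  assert (T3 : 0 < ((b1 + b2 - 2 * lam) * X + ((b1 + b2) * lam - 2 * b1 * b2) * (1 - I))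
     / ((X - a) ^ 2 * (X - b) ^ 2)).
  { apply Rdiv_lt_0_compat; [|apply Rmult_lt_0_compat; lra].
    replace ((b1 + b2 - 2 * lam) * X + ((b1 + b2) * lam - 2 * b1 * b2) * (1 - I))
      with ((X - b) * (b1 - lam) + (a - X) * (lam - b2)) by (unfold a, b; ring).
    destruct (Rle_lt_or_eq_dec lam b1 (proj2 Hl)) as [Hlt|Heq].
    - assert (0 < (X - b) * (b1 - lam)) by (apply Rmult_lt_0_compat; lra).
      assert (0 <= (a - X) * (lam - b2)) by (apply Rmult_le_pos; lra). lra.
    - subst lam. assert (0 < (a - X) * (b1 - b2)) by (apply Rmult_lt_0_compat; lra). lra. }
  lra.
Qed.

Lemma cont_of_derive (f : R -> R) x l : is_derive f x l -> continuity_pt f x.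
Proof. intros H. apply continuity_pt_filterlim. apply (ex_derive_continuous f x). exists l; exact H. Qed.

Lemma Dfun_at1 b1 b2 F0 F1 F2 I : Dfun b1 b2 F0 F1 F2 1 I = 0.
Proof. unfold Dfun, LI. ring. Qed.

Lemma Dfun_sign b1 b2 lam F0 F1 F2 X I :
  b1 > b2 -> b2 <= lam <= b1 -> 0 < I < 1 -> b2 * (1 - I) < X < b1 * (1 - I) ->
  b2 * (1 - I) < 1 < b1 * (1 - I) ->
  ((F0 - lam * I) / (1 - I) + b1 * F1 + b1 ^ 2 * (I + (1 - I) * F2)) / (b2 - b1) >= 0 ->
  ((F0 - lam * I) / (1 - I) + b2 * F1 + b2 ^ 2 * (I + (1 - I) * F2)) / (b1 - b2) >= 0 ->
  0 <= (X - 1) * Dfun b1 b2 F0 F1 F2 X I /\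
  (X <> 1 -> 0 < (X - 1) * Dfun b1 b2 F0 F1 F2 X I).
Proof.
  intros Hb Hl HI HX H1 Hh1 Hh2.
  assert (Hin : forall Y, Rmin 1 X <= Y <= Rmax 1 X -> b2 * (1 - I) < Y < b1 * (1 - I)).
  { intros Y HY. unfold Rmin, Rmax in HY. destruct (Rle_dec 1 X); lra. }
  assert (Hd1 : forall Y, Rmin 1 X < Y < Rmax 1 X ->
     is_derive (fun Y => Dfun b1 b2 F0 F1 F2 Y I) Y (dDfun b1 b2 lam F0 F1 F2 Y I)).
  { intros Y HY. apply Dfun_deriv; auto. apply Hin; lra. }
  assert (Hd2 : forall Y, Rmin 1 X <= Y <= Rmax 1 X ->
     continuity_pt (fun Y => Dfun b1 b2 F0 F1 F2 Y I) Y).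
  { intros Y HY. eapply cont_of_derive. apply (Dfun_deriv b1 b2 lam); auto. }
  destruct (MVT_gen (fun Y => Dfun b1 b2 F0 F1 F2 Y I) 1 X
              (fun Y => dDfun b1 b2 lam F0 F1 F2 Y I) Hd1 Hd2) as [c [Hc Heq]].
  - rewrite Dfun_at1 in Heq.
    assert (Hp : 0 < dDfun b1 b2 lam F0 F1 F2 c I) by (apply dDfun_pos; auto; apply Hin; auto).
    rewrite Rminus_0_r in Heq. rewrite Heq.
    split.
    + replace ((X - 1) * (dDfun b1 b2 lam F0 F1 F2 c I * (X - 1)))
        with (dDfun b1 b2 lam F0 F1 F2 c I * (X - 1)^2) by ring.
      apply Rmult_le_pos; [lra|]. apply pow2_ge_0.
    + intros Hne.
      replace ((X - 1) * (dDfun b1 b2 lam F0 F1 F2 c I * (X - 1)))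
        with (dDfun b1 b2 lam F0 F1 F2 c I * (X - 1)^2) by ring.
      apply Rmult_lt_0_compat; [lra|].
      destruct (Rlt_or_le X 1); [replace ((X-1)^2) with ((1-X)^2) by ring|]; apply pow_lt; lra.
Qed.

Lemma Lf_chain b1 b2 (x i : R -> R) t dx di :
  is_derive x t dx -> is_derive i t di -> b1 > b2 -> 0 < i t < 1 ->
  b2 * (1 - i t) < x t < b1 * (1 - i t) -> b2 * (1 - i t) < 1 < b1 * (1 - i t) ->
  is_derive (fun t => Lf b1 b2 (x t) (i t)) t
    ((x t - 1) / ((x t - b1 * (1 - i t)) * (x t - b2 * (1 - i t))) * dx
     + LI b1 b2 (x t) (i t) * di).
Proof.
  intros Hx Hi Hb HI HX H1.
  assert (i t <> 0) by lra. assert (1 - i t <> 0) by lra. assert (b1 - b2 <> 0) by lra.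
  assert (x t - b1 * (1 - i t) <> 0) by lra. assert (x t - b2 * (1 - i t) <> 0) by lra.
  assert (b1 * (1 - i t) - x t <> 0) by lra.
  assert (b1 * (1 - i t) - 1 <> 0) by lra. assert (1 - b2 * (1 - i t) <> 0) by lra.
  unfold Lf, LI, Ac, dAc.
  auto_derive.
  - repeat split; try lra; try (exists dx; exact Hx); try (exists di; exact Hi).
  - replace (Derive (fun x0 => x x0) t) with dx by (symmetry; apply is_derive_unique; exact Hx).
    replace (Derive (fun x0 => i x0) t) with di by (symmetry; apply is_derive_unique; exact Hi).
    unfold Rminus in *. field. repeat split; auto.
Qed.

Definition Jp (b1 b2 I : R) : Prop := 0 < I < 1 /\ b2 * (1 - I) < 1 < b1 * (1 - I).
Definition mG (b1 b2 : R) (G0 G1 G2 : R -> R) (I : R) : R :=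
  Bv b1 b2 1 I * (G0 I + G1 I + G2 I).
Definition Vf (b1 b2 : R) (G0 G1 G2 : R -> R) (c X I : R) : R :=
  Lf b1 b2 X I - RInt (mG b1 b2 G0 G1 G2) c I.

Lemma loc_pos (g : R -> R) I : continuous g I -> 0 < g I -> locally I (fun y => 0 < g y).
Proof.
  intros Hc Hp. apply Hc. apply (locally_interval _ _ 0 p_infty); simpl; auto.
Qed.

Lemma aff_lt1 k c y z : Rmin c y <= z <= Rmax c y -> 1 < k * (1 - c) -> 1 < k * (1 - y) -> 1 < k * (1 - z).
Proof.
  intros Hz Hc Hy. unfold Rmin, Rmax in Hz.
  destruct (Rle_dec c y); destruct (Rle_dec 0 k); nra.
Qed.

Lemma aff_gt1 k c y z : Rmin c y <= z <= Rmax c y -> k * (1 - c) < 1 -> k * (1 - y) < 1 -> k * (1 - z) < 1.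
Proof.
  intros Hz Hc Hy. unfold Rmin, Rmax in Hz.
  destruct (Rle_dec c y); destruct (Rle_dec 0 k); nra.
Qed.

Lemma Jp_between b1 b2 c y z : Jp b1 b2 c -> Jp b1 b2 y -> Rmin c y <= z <= Rmax c y -> Jp b1 b2 z.
Proof.
  unfold Jp. intros [Hc1 [Hc2 Hc3]] [Hy1 [Hy2 Hy3]] Hz.
  assert (0 < z < 1) by (unfold Rmin, Rmax in Hz; destruct (Rle_dec c y); lra).
  split; auto. split; [eapply aff_gt1 | eapply aff_lt1]; eauto.
Qed.

Lemma Jp_open b1 b2 I : Jp b1 b2 I -> locally I (Jp b1 b2).
Proof.
  intros [[H1 H2] [H3 H4]].
  assert (Hc : forall (g : R -> R) l, (forall y, is_derive g y l) -> forall y, continuous g y).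
  { intros g l Hg y. apply (ex_derive_continuous g y). exists l; auto. }
  assert (L1 : locally I (fun y => 0 < y)).
  { apply (loc_pos (fun y => y)); auto. apply (Hc _ 1). intros; auto_derive; auto; ring. }
  assert (L2 : locally I (fun y => 0 < 1 - y)).
  { apply (loc_pos (fun y => 1 - y)); [|lra]. apply (Hc _ (-1)). intros; auto_derive; auto; ring. }
  assert (L3 : locally I (fun y => 0 < 1 - b2 * (1 - y))).
  { apply (loc_pos (fun y => 1 - b2 * (1 - y))); [|lra]. apply (Hc _ b2). intros; auto_derive; auto; ring. }
  assert (L4 : locally I (fun y => 0 < b1 * (1 - y) - 1)).
  { apply (loc_pos (fun y => b1 * (1 - y) - 1)); [|lra]. apply (Hc _ (-b1)). intros; auto_derive; auto; ring. }
  generalize (filter_and _ _ L1 (filter_and _ _ L2 (filter_and _ _ L3 L4))).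
  apply filter_imp. intros y [A [B [C D]]]. unfold Jp. lra.
Qed.

Lemma mG_cont b1 b2 (G0 G1 G2 : R -> R) z :
  (forall y, ex_derive G0 y) -> (forall y, ex_derive G1 y) -> (forall y, ex_derive G2 y) ->
  Jp b1 b2 z -> continuous (mG b1 b2 G0 G1 G2) z.
Proof.
  intros D0 D1 D2 [[H1 H2] [H3 H4]].
  apply (ex_derive_continuous (mG b1 b2 G0 G1 G2) z).
  unfold mG, Bv. auto_derive. repeat split; auto.
  repeat apply Rmult_integral_contrapositive_currified; lra.
Qed.

Lemma M_deriv b1 b2 (G0 G1 G2 : R -> R) c I :
  (forall y, ex_derive G0 y) -> (forall y, ex_derive G1 y) -> (forall y, ex_derive G2 y) ->
  Jp b1 b2 c -> Jp b1 b2 I ->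
  is_derive (fun I => RInt (mG b1 b2 G0 G1 G2) c I) I (mG b1 b2 G0 G1 G2 I).
Proof.
  intros D0 D1 D2 Hc HI.
  apply (is_derive_RInt _ _ c).
  - generalize (Jp_open b1 b2 I HI). apply filter_imp. intros y Hy.
    apply (RInt_correct (V:=R_CompleteNormedModule)). apply ex_RInt_continuous. intros z Hz.
    apply (mG_cont b1 b2 G0 G1 G2 z); auto. apply (Jp_between b1 b2 c y z); auto.
  - apply (mG_cont b1 b2 G0 G1 G2 I); auto.
Qed.

Lemma V_chain b1 b2 (f0 f1 f2 G0 G1 G2 x i : R -> R) c t :
  (forall y, ex_derive G0 y) -> (forall y, ex_derive G1 y) -> (forall y, ex_derive G2 y) ->
  f0 (i t) = G0 (i t) -> f1 (i t) = G1 (i t) -> f2 (i t) = G2 (i t) ->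
  is_derive x t (fXI f0 f1 f2 (x t) (i t)) -> is_derive i t ((x t - 1) * i t) ->
  b1 > b2 -> Jp b1 b2 c -> Jp b1 b2 (i t) ->
  b2 * (1 - i t) < x t < b1 * (1 - i t) ->
  is_derive (fun t => Vf b1 b2 G0 G1 G2 c (x t) (i t)) t
    ((x t - 1) * i t * Dfun b1 b2 (f0 (i t)) (f1 (i t)) (f2 (i t)) (x t) (i t)).
Proof.
  intros D0 D1 D2 E0 E1 E2 Hx Hi Hb Hc HJ HX.
  destruct HJ as [HI H1].
  assert (HL := Lf_chain b1 b2 x i t _ _ Hx Hi Hb HI HX H1).
  assert (HM := is_derive_comp _ _ t _ _ (M_deriv b1 b2 G0 G1 G2 c (i t) D0 D1 D2 Hc (conj HI H1)) Hi).
  assert (HV := is_derive_minus _ _ t _ _ HL HM).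
  unfold Vf.
  replace ((x t - 1) * i t * Dfun b1 b2 (f0 (i t)) (f1 (i t)) (f2 (i t)) (x t) (i t))
    with (minus ((x t - 1) / ((x t - b1 * (1 - i t)) * (x t - b2 * (1 - i t))) *
       fXI f0 f1 f2 (x t) (i t) + LI b1 b2 (x t) (i t) * ((x t - 1) * i t))
      (scal ((x t - 1) * i t) (mG b1 b2 G0 G1 G2 (i t)))).
  - exact HV.
  - unfold minus, plus, opp, scal; simpl. unfold mult; simpl.
    unfold Dfun, mG, Bv, fXI. rewrite E0, E1, E2.
    assert (i t <> 0) by lra. assert (x t - b1 * (1 - i t) <> 0) by lra.
    assert (x t - b2 * (1 - i t) <> 0) by lra. assert (1 - b1 * (1 - i t) <> 0) by lra.
    assert (1 - b2 * (1 - i t) <> 0) by lra.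
    field. repeat split; auto.
Qed.

Lemma nondecr_of_deriv (phi d : R -> R) :
  (forall t, is_derive phi t (d t)) -> (forall t, 0 <= d t) ->
  forall s t, s <= t -> phi s <= phi t.
Proof.
  intros Hd Hp s t Hst.
  destruct (MVT_gen phi s t d) as [c [Hc Heq]].
  - intros; apply Hd.
  - intros y _. eapply cont_of_derive. apply Hd.
  - assert (0 <= d c * (t - s)) by (apply Rmult_le_pos; [apply Hp|lra]). lra.
Qed.

Lemma const_of_deriv0 (g : R -> R) : (forall t, is_derive g t 0) -> forall t, g t = g 0.
Proof.
  intros Hd t.
  destruct (MVT_gen g 0 t (fun _ => 0)) as [c [Hc Heq]].
  - intros; apply Hd.
  - intros y _. eapply cont_of_derive. apply Hd.
  - lra.
Qed.

Lemma deriv_zero_of_const (g : R -> R) t l : is_derive g t l -> (forall s, g s = g 0) -> l = 0.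
Proof.
  intros Hd Hc.
  assert (Hd' : is_derive (fun _ => g 0) t l).
  { apply (is_derive_ext g); auto. }
  assert (H0 : is_derive (fun _ : R => g 0) t 0) by (auto_derive; auto).
  rewrite <- (is_derive_unique _ _ _ Hd'). apply is_derive_unique. exact H0.
Qed.

Lemma max_deriv0 (g : R -> R) tm l : (forall t, g t <= g tm) -> is_derive g tm l -> l = 0.
Proof.
  intros Hm Hd. apply is_derive_Reals in Hd.
  set (pr := exist (fun l0 => derivable_pt_lim g tm l0) l Hd : derivable_pt g tm).
  assert (derive_pt g tm pr = 0).
  { apply (deriv_maximum g (tm - 1) (tm + 1)); try lra. intros; apply Hm. }
  exact H.
Qed.

Lemma min_deriv0 (g : R -> R) tm l : (forall t, g tm <= g t) -> is_derive g tm l -> l = 0.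
Proof.
  intros Hm Hd. apply is_derive_Reals in Hd.
  set (pr := exist (fun l0 => derivable_pt_lim g tm l0) l Hd : derivable_pt g tm).
  assert (derive_pt g tm pr = 0).
  { apply (deriv_minimum g (tm - 1) (tm + 1)); try lra. intros; apply Hm. }
  exact H.
Qed.

Lemma per_nat (g : R -> R) T : (forall t, g (t + T) = g t) ->
  forall n s, g (s + INR n * T) = g s.
Proof.
  intros Hp n. induction n as [|n IH]; intros s.
  - simpl. f_equal. ring.
  - rewrite S_INR. replace (s + (INR n + 1) * T) with ((s + INR n * T) + T) by ring.
    rewrite Hp. apply IH.
Qed.

Lemma per_Z (g : R -> R) T : (forall t, g (t + T) = g t) ->
  forall z s, g (s + IZR z * T) = g s.
Proof.
  intros Hp z s.
  destruct (Z_le_gt_dec 0%Z z) as [Hz|Hz].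
  - rewrite <- (Z2Nat.id z Hz). rewrite <- INR_IZR_INZ. apply per_nat; auto.
  - assert (Hz' : (0 <= - z)%Z) by lia.
    replace (IZR z) with (- INR (Z.to_nat (- z))).
    + rewrite <- (per_nat g T Hp (Z.to_nat (- z)) (s + - INR (Z.to_nat (- z)) * T)).
      f_equal. ring.
    + rewrite INR_IZR_INZ, Z2Nat.id by auto. rewrite opp_IZR. f_equal. ring.
Qed.

Lemma per_red (g : R -> R) T : 0 < T -> (forall t, g (t + T) = g t) ->
  forall t, exists s, 0 <= s <= T /\ g t = g s.
Proof.
  intros HT Hp t.
  destruct (base_Int_part (t / T)) as [H1 H2].
  set (k := Int_part (t / T)) in *.
  exists (t - IZR k * T). split.
  - assert (IZR k * T <= t / T * T) by (apply Rmult_le_compat_r; lra).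
    assert (t / T * T - T < IZR k * T) by (replace (t / T * T - T) with ((t / T - 1) * T) by ring;
        apply Rmult_lt_compat_r; lra).
    replace (t / T * T) with t in * by (field; lra). lra.
  - rewrite <- (per_Z g T Hp k (t - IZR k * T)). f_equal. ring.
Qed.

Lemma int_dec b1 b2 P : b1 > b2 -> in_int_T b1 b2 P ->
  0 < snd P < 1 /\ b2 * (1 - snd P) < fst P < b1 * (1 - snd P).
Proof.
  intros Hb [a [b [c [Ha [Hb' [Hc [Hs [HX HI]]]]]]]].
  rewrite HX, HI. replace (1 - (a * 0 + b * 0 + c * 1)) with (a + b) by lra.
  split; [lra|]. split; nra.
Qed.

Definition compatI (f0 f1 f2 : R -> R) (b1 b2 : R) : Prop :=
  forall I, 0 < I < 1 ->
  ((f0 I - f0 1 * I) / (1 - I) + b1 * f1 I + b1 ^ 2 * (I + (1 - I) * f2 I)) / (b2 - b1) >= 0 /\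
  ((f0 I - f0 1 * I) / (1 - I) + b2 * f1 I + b2 ^ 2 * (I + (1 - I) * f2 I)) / (b1 - b2) >= 0.

Lemma phi_deriv b1 b2 (f0 f1 f2 G0 G1 G2 x i : R -> R) c :
  (forall y, ex_derive G0 y) -> (forall y, ex_derive G1 y) -> (forall y, ex_derive G2 y) ->
  (forall y, 0 <= y -> G0 y = f0 y) -> (forall y, 0 <= y -> G1 y = f1 y) ->
  (forall y, 0 <= y -> G2 y = f2 y) ->
  b1 > b2 -> b2 <= f0 1 <= b1 -> compatI f0 f1 f2 b1 b2 ->
  is_solution f0 f1 f2 x i -> (forall t, in_int_T b1 b2 (x t, i t)) ->
  (forall t, Jp b1 b2 (i t)) -> Jp b1 b2 c ->
  forall t,
  is_derive (fun t => Vf b1 b2 G0 G1 G2 c (x t) (i t)) t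
    ((x t - 1) * i t * Dfun b1 b2 (f0 (i t)) (f1 (i t)) (f2 (i t)) (x t) (i t)) /\
  0 <= (x t - 1) * i t * Dfun b1 b2 (f0 (i t)) (f1 (i t)) (f2 (i t)) (x t) (i t) /\
  ((x t - 1) * i t * Dfun b1 b2 (f0 (i t)) (f1 (i t)) (f2 (i t)) (x t) (i t) = 0 -> x t = 1).
Proof.
  intros D0 D1 D2 E0 E1 E2 Hb Hl Hcomp Hsol Hint HJ Hc t.
  destruct (int_dec b1 b2 _ Hb (Hint t)) as [HI HX]. simpl in HI, HX.
  destruct (Hsol t) as [Hx Hi].
  destruct (Hcomp (i t) HI) as [Hh1 Hh2].
  destruct (HJ t) as [_ H1].
  destruct (Dfun_sign b1 b2 (f0 1) (f0 (i t)) (f1 (i t)) (f2 (i t)) (x t) (i t) Hb Hl HI HX H1 Hh1 Hh2)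
    as [S1 S2].
  split; [|split].
  - apply V_chain; auto; symmetry; [apply E0|apply E1|apply E2]; lra.
  - replace ((x t - 1) * i t * Dfun b1 b2 (f0 (i t)) (f1 (i t)) (f2 (i t)) (x t) (i t))
      with (i t * ((x t - 1) * Dfun b1 b2 (f0 (i t)) (f1 (i t)) (f2 (i t)) (x t) (i t))) by ring.
    apply Rmult_le_pos; lra.
  - intros H0. destruct (Req_dec (x t) 1) as [|Hne]; auto.
    specialize (S2 Hne).
    assert (0 < i t * ((x t - 1) * Dfun b1 b2 (f0 (i t)) (f1 (i t)) (f2 (i t)) (x t) (i t)))
      by (apply Rmult_lt_0_compat; lra).
    lra.
Qed.

Lemma orbit_const b1 b2 (f0 f1 f2 G0 G1 G2 x i : R -> R) c :
  (forall y, ex_derive G0 y) -> (forall y, ex_derive G1 y) -> (forall y, ex_derive G2 y) ->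
  (forall y, 0 <= y -> G0 y = f0 y) -> (forall y, 0 <= y -> G1 y = f1 y) ->
  (forall y, 0 <= y -> G2 y = f2 y) ->
  b1 > b2 -> b2 <= f0 1 <= b1 -> compatI f0 f1 f2 b1 b2 ->
  is_solution f0 f1 f2 x i -> (forall t, in_int_T b1 b2 (x t, i t)) ->
  (forall t, Jp b1 b2 (i t)) -> Jp b1 b2 c ->
  (forall t, Vf b1 b2 G0 G1 G2 c (x t) (i t) = Vf b1 b2 G0 G1 G2 c (x 0) (i 0)) ->
  forall t, x t = 1 /\ i t = i 0.
Proof.
  intros D0 D1 D2 E0 E1 E2 Hb Hl Hcomp Hsol Hint HJ Hc Hconst.
  assert (Hx1 : forall t, x t = 1).
  { intros t. destruct (phi_deriv b1 b2 f0 f1 f2 G0 G1 G2 x i c D0 D1 D2 E0 E1 E2 Hb Hl Hcomp Hsol Hint HJ Hc t)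
      as [Hd [_ Hz]].
    apply Hz. eapply (deriv_zero_of_const (fun t => Vf b1 b2 G0 G1 G2 c (x t) (i t))); eauto. }
  assert (Hi0 : forall t, is_derive i t 0).
  { intros t. destruct (Hsol t) as [_ Hi]. rewrite Hx1 in Hi.
    replace 0 with ((1 - 1) * i t) by ring. exact Hi. }
  intros t. split; auto. apply const_of_deriv0; auto.
Qed.

Lemma ext_Jp b1 b2 (f0 f1 f2 x i : R -> R) tm :
  b1 > b2 -> is_solution f0 f1 f2 x i -> in_int_T b1 b2 (x tm, i tm) ->
  ((forall t, i t <= i tm) \/ (forall t, i tm <= i t)) -> Jp b1 b2 (i tm).
Proof.
  intros Hb Hsol Hint Hext.
  destruct (int_dec b1 b2 _ Hb Hint) as [HI HX]; simpl in HI, HX.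
  destruct (Hsol tm) as [_ Hi].
  assert (H0 : (x tm - 1) * i tm = 0).
  { destruct Hext as [H|H]; [eapply max_deriv0|eapply min_deriv0]; eauto. }
  assert (x tm = 1).
  { destruct (Rmult_integral _ _ H0); lra. }
  unfold Jp. rewrite H in HX. lra.
Qed.

Lemma Jp_mid b1 b2 u w z : Jp b1 b2 u -> Jp b1 b2 w -> u <= z <= w -> Jp b1 b2 z.
Proof.
  intros Hu Hw Hz. apply (Jp_between b1 b2 u w z); auto.
  unfold Rmin, Rmax; destruct (Rle_dec u w); lra.
Qed.

Lemma sol_cont (f0 f1 f2 x i : R -> R) : is_solution f0 f1 f2 x i ->
  forall t, continuity_pt i t.
Proof. intros Hsol t. destruct (Hsol t) as [_ Hi]. eapply cont_of_derive; eauto. Qed.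

Lemma Jp_periodic b1 b2 (f0 f1 f2 x i : R -> R) T :
  b1 > b2 -> is_solution f0 f1 f2 x i -> 0 < T -> (forall t, i (t + T) = i t) ->
  (forall t, in_int_T b1 b2 (x t, i t)) -> forall t, Jp b1 b2 (i t).
Proof.
  intros Hb Hsol HT Hp Hint.
  destruct (continuity_ab_maj i 0 T) as [tM [HM _]]; [lra| intros; eapply sol_cont; eauto |].
  destruct (continuity_ab_min i 0 T) as [tm [Hm _]]; [lra| intros; eapply sol_cont; eauto |].
  assert (GM : forall t, i t <= i tM).
  { intros t. destruct (per_red i T HT Hp t) as [s [Hs ->]]. auto. }
  assert (Gm : forall t, i tm <= i t).
  { intros t. destruct (per_red i T HT Hp t) as [s [Hs ->]]. auto. }
  assert (JM : Jp b1 b2 (i tM)) by (eapply ext_Jp; eauto).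
  assert (Jm : Jp b1 b2 (i tm)) by (eapply ext_Jp; eauto).
  intros t. apply (Jp_mid b1 b2 (i tm) (i tM)); auto.
Qed.

Lemma lim_lt_p (i : R -> R) (lp : R) a : is_lim i p_infty lp -> lp < a -> exists M, forall t, M < t -> i t < a.
Proof.
  intros H Hl. assert (H' := H (fun y => y < a)). simpl in H'. apply H'.
  apply (locally_interval _ _ m_infty a); simpl; auto.
Qed.
Lemma lim_lt_m (i : R -> R) (lp : R) a : is_lim i m_infty lp -> lp < a -> exists M, forall t, t < M -> i t < a.
Proof.
  intros H Hl. assert (H' := H (fun y => y < a)). simpl in H'. apply H'.
  apply (locally_interval _ _ m_infty a); simpl; auto.
Qed.
Lemma lim_gt_p (i : R -> R) (lp : R) a : is_lim i p_infty lp -> a < lp -> exists M, forall t, M < t -> a < i t.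
Proof.
  intros H Hl. assert (H' := H (fun y => a < y)). simpl in H'. apply H'.
  apply (locally_interval _ _ a p_infty); simpl; auto.
Qed.
Lemma lim_gt_m (i : R -> R) (lp : R) a : is_lim i m_infty lp -> a < lp -> exists M, forall t, t < M -> a < i t.
Proof.
  intros H Hl. assert (H' := H (fun y => a < y)). simpl in H'. apply H'.
  apply (locally_interval _ _ a p_infty); simpl; auto.
Qed.

Lemma Jp_limits b1 b2 (f0 f1 f2 x i : R -> R) (lm lp : R) :
  b1 > b2 -> is_solution f0 f1 f2 x i ->
  (forall t, in_int_T b1 b2 (x t, i t)) ->
  is_lim i m_infty lm -> is_lim i p_infty lp -> Jp b1 b2 lm -> Jp b1 b2 lp ->
  forall t, Jp b1 b2 (i t).
Proof.
  intros Hb Hsol Hint Hm Hp Jm Jpp t0.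
  assert (Up : exists w, Jp b1 b2 w /\ i t0 <= w).
  { destruct (Rle_dec (i t0) lm) as [H|H]; [exists lm; auto|].
    destruct (Rle_dec (i t0) lp) as [H'|H']; [exists lp; auto|].
    destruct (lim_lt_p i lp (i t0) Hp) as [M1 HM1]; [lra|].
    destruct (lim_lt_m i lm (i t0) Hm) as [M2 HM2]; [lra|].
    destruct (continuity_ab_maj i (Rmin M2 t0) (Rmax M1 t0)) as [tM [HM HtM]].
    - unfold Rmin, Rmax; destruct (Rle_dec M2 t0); destruct (Rle_dec M1 t0); lra.
    - intros; eapply sol_cont; eauto.
    - assert (Hge : i t0 <= i tM) by (apply HM; unfold Rmin, Rmax;
        destruct (Rle_dec M2 t0); destruct (Rle_dec M1 t0); lra).
      assert (G : forall t, i t <= i tM).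
      { intros t. destruct (Rlt_dec t M2) as [h|h]; [specialize (HM2 t h); lra|].
        destruct (Rlt_dec M1 t) as [h'|h']; [specialize (HM1 t h'); lra|].
        apply HM. unfold Rmin, Rmax; destruct (Rle_dec M2 t0); destruct (Rle_dec M1 t0); lra. }
      exists (i tM). split; auto. eapply ext_Jp; eauto. }
  assert (Lo : exists u, Jp b1 b2 u /\ u <= i t0).
  { destruct (Rle_dec lm (i t0)) as [H|H]; [exists lm; auto|].
    destruct (Rle_dec lp (i t0)) as [H'|H']; [exists lp; auto|].
    destruct (lim_gt_p i lp (i t0) Hp) as [M1 HM1]; [lra|].
    destruct (lim_gt_m i lm (i t0) Hm) as [M2 HM2]; [lra|].
    destruct (continuity_ab_min i (Rmin M2 t0) (Rmax M1 t0)) as [tM [HM HtM]].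
    - unfold Rmin, Rmax; destruct (Rle_dec M2 t0); destruct (Rle_dec M1 t0); lra.
    - intros; eapply sol_cont; eauto.
    - assert (Hge : i tM <= i t0) by (apply HM; unfold Rmin, Rmax;
        destruct (Rle_dec M2 t0); destruct (Rle_dec M1 t0); lra).
      assert (G : forall t, i tM <= i t).
      { intros t. destruct (Rlt_dec t M2) as [h|h]; [specialize (HM2 t h); lra|].
        destruct (Rlt_dec M1 t) as [h'|h']; [specialize (HM1 t h'); lra|].
        apply HM. unfold Rmin, Rmax; destruct (Rle_dec M2 t0); destruct (Rle_dec M1 t0); lra. }
      exists (i tM). split; auto. eapply ext_Jp; eauto. }
  destruct Up as [w [Jw Hw]]. destruct Lo as [u [Ju Hu]].
  apply (Jp_mid b1 b2 u w); auto.
Qed.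

Lemma is_lim_mult_fin (f g : R -> R) F (a b : R) :
  is_lim f F a -> is_lim g F b -> is_lim (fun t => f t * g t) F (a * b).
Proof. intros Hf Hg. apply (is_lim_mult f g F a b Hf Hg). simpl; auto. Qed.

Lemma cont_fun (g : R -> R) y : ex_derive g y -> continuous g y.
Proof. intros H. apply (ex_derive_continuous g y H). Qed.

Lemma V_lim b1 b2 (G0 G1 G2 x i : R -> R) c F (l1 l2 : R) :
  (forall y, ex_derive G0 y) -> (forall y, ex_derive G1 y) -> (forall y, ex_derive G2 y) ->
  b1 > b2 -> Jp b1 b2 c -> Jp b1 b2 l2 -> b2 * (1 - l2) < l1 < b1 * (1 - l2) ->
  is_lim x F l1 -> is_lim i F l2 ->
  is_lim (fun t => Vf b1 b2 G0 G1 G2 c (x t) (i t)) F (Vf b1 b2 G0 G1 G2 c l1 l2).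
Proof.
  intros D0 D1 D2 Hb Hc HJ HX Hx Hi.
  destruct HJ as [HI H1].
  assert (HA : is_lim (fun t => Ac b1 b2 (i t)) F (Ac b1 b2 l2)).
  { apply (is_lim_comp_continuous i (Ac b1 b2)); auto. apply cont_fun.
    unfold Ac. auto_derive. lra. }
  assert (HA' : is_lim (fun t => 1 - Ac b1 b2 (i t)) F (1 - Ac b1 b2 l2)).
  { apply (is_lim_minus' (fun _ => 1)); auto. apply is_lim_const. }
  assert (Hu1 : is_lim (fun t => ln (b1 * (1 - i t) - x t)) F (ln (b1 * (1 - l2) - l1))).
  { apply (is_lim_comp_continuous (fun t => b1 * (1 - i t) - x t) ln).
    - apply (is_lim_minus' (fun t => b1 * (1 - i t))); auto.
      apply (is_lim_comp_continuous i (fun I => b1 * (1 - I))); auto. apply cont_fun. auto_derive; auto.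
    - apply continuous_ln; lra. }
  assert (Hu2 : is_lim (fun t => ln (x t - b2 * (1 - i t))) F (ln (l1 - b2 * (1 - l2)))).
  { apply (is_lim_comp_continuous (fun t => x t - b2 * (1 - i t)) ln).
    - apply (is_lim_minus' x (fun t => b2 * (1 - i t))); auto.
      apply (is_lim_comp_continuous i (fun I => b2 * (1 - I))); auto. apply cont_fun. auto_derive; auto.
    - apply continuous_ln; lra. }
  assert (Hr1 : is_lim (fun t => ln (b1 * (1 - i t) - 1)) F (ln (b1 * (1 - l2) - 1))).
  { apply (is_lim_comp_continuous i (fun I => ln (b1 * (1 - I) - 1))); auto.
    apply cont_fun. auto_derive. lra. }
  assert (Hr2 : is_lim (fun t => ln (1 - b2 * (1 - i t))) F (ln (1 - b2 * (1 - l2)))).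
  { apply (is_lim_comp_continuous i (fun I => ln (1 - b2 * (1 - I)))); auto.
    apply cont_fun. auto_derive. lra. }
  assert (HR : is_lim (fun t => RInt (mG b1 b2 G0 G1 G2) c (i t)) F (RInt (mG b1 b2 G0 G1 G2) c l2)).
  { apply (is_lim_comp_continuous i (fun I => RInt (mG b1 b2 G0 G1 G2) c I)); auto.
    apply cont_fun. eexists. apply M_deriv; auto. split; auto. }
  unfold Vf, Lf.
  apply is_lim_minus'; auto.
  apply is_lim_minus'; [|apply is_lim_mult_fin; auto].
  apply is_lim_plus'; [|apply is_lim_mult_fin; auto].
  apply is_lim_minus'; apply is_lim_mult_fin; auto.
Qed.

Lemma mono_lims (phi : R -> R) (a b : R) : (forall s t, s <= t -> phi s <= phi t) ->
  is_lim phi m_infty a -> is_lim phi p_infty b -> forall t, a <= phi t <= phi t /\ phi t <= b.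
Proof.
  intros Hm Ha Hb t. split; [split; [|lra]|].
  - assert (H := is_lim_le_loc phi (fun _ => phi t) m_infty a (phi t)).
    simpl in H. apply H; auto. exists t. intros; apply Hm; lra. apply is_lim_const.
  - assert (H := is_lim_le_loc (fun _ => phi t) phi p_infty (phi t) b).
    simpl in H. apply H; auto. exists t. intros; apply Hm; lra. apply is_lim_const.
Qed.

Lemma equil_int b1 b2 f0 f1 f2 P : b1 > b2 -> is_equilibrium f0 f1 f2 P -> in_int_T b1 b2 P ->
  fst P = 1 /\ Jp b1 b2 (snd P) /\ b2 * (1 - snd P) < fst P < b1 * (1 - snd P).
Proof.
  intros Hb [_ He] Hi. destruct (int_dec b1 b2 P Hb Hi) as [HI HX].
  assert (fst P = 1) by (destruct (Rmult_integral _ _ He); lra).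
  split; auto. split; auto. unfold Jp. rewrite H in HX. lra.
Qed.

Lemma orbit_between b1 b2 (f0 f1 f2 G0 G1 G2 x i : R -> R) c P Q :
  (forall y, ex_derive G0 y) -> (forall y, ex_derive G1 y) -> (forall y, ex_derive G2 y) ->
  (forall y, 0 <= y -> G0 y = f0 y) -> (forall y, 0 <= y -> G1 y = f1 y) ->
  (forall y, 0 <= y -> G2 y = f2 y) ->
  b1 > b2 -> b2 <= f0 1 <= b1 -> compatI f0 f1 f2 b1 b2 -> Jp b1 b2 c ->
  is_equilibrium f0 f1 f2 P -> in_int_T b1 b2 P ->
  is_equilibrium f0 f1 f2 Q -> in_int_T b1 b2 Q ->
  is_solution f0 f1 f2 x i -> (forall t, in_int_T b1 b2 (x t, i t)) ->
  connects x i P Q ->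
  Vf b1 b2 G0 G1 G2 c (fst P) (snd P) <= Vf b1 b2 G0 G1 G2 c (fst Q) (snd Q) /\
  (Vf b1 b2 G0 G1 G2 c (fst P) (snd P) = Vf b1 b2 G0 G1 G2 c (fst Q) (snd Q) ->
   forall t, (x t, i t) = P).
Proof.
  intros D0 D1 D2 E0 E1 E2 Hb Hl Hcomp Hc HeP HiP HeQ HiQ Hsol Hin [Hxm [Him [Hxp Hip]]].
  destruct (equil_int b1 b2 f0 f1 f2 P Hb HeP HiP) as [P1 [JP SP]].
  destruct (equil_int b1 b2 f0 f1 f2 Q Hb HeQ HiQ) as [Q1 [JQ SQ]].
  assert (HJ : forall t, Jp b1 b2 (i t)) by (eapply Jp_limits; eauto).
  set (phi := fun t => Vf b1 b2 G0 G1 G2 c (x t) (i t)).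
  assert (Hd := phi_deriv b1 b2 f0 f1 f2 G0 G1 G2 x i c D0 D1 D2 E0 E1 E2 Hb Hl Hcomp Hsol Hin HJ Hc).
  assert (Hmono : forall s t, s <= t -> phi s <= phi t).
  { apply (nondecr_of_deriv phi (fun t => (x t - 1) * i t * Dfun b1 b2 (f0 (i t)) (f1 (i t)) (f2 (i t)) (x t) (i t)));
    [intros t; exact (proj1 (Hd t)) | intros t; exact (proj1 (proj2 (Hd t)))]. }
  assert (Lm : is_lim phi m_infty (Vf b1 b2 G0 G1 G2 c (fst P) (snd P))) by (apply V_lim; auto).
  assert (Lp : is_lim phi p_infty (Vf b1 b2 G0 G1 G2 c (fst Q) (snd Q))) by (apply V_lim; auto).
  assert (B := mono_lims phi _ _ Hmono Lm Lp).
  split.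
  - destruct (B 0); lra.
  - intros Heq.
    assert (Hconst : forall t, phi t = phi 0) by (intros t; destruct (B t); destruct (B 0); lra).
    assert (OC := orbit_const b1 b2 f0 f1 f2 G0 G1 G2 x i c D0 D1 D2 E0 E1 E2 Hb Hl Hcomp Hsol Hin HJ Hc Hconst).
    assert (Hi0 : i 0 = snd P).
    { assert (Lc : is_lim (fun _ => i 0) m_infty (snd P)).
      { apply (is_lim_ext i); auto. intros y; apply (proj2 (OC y)). }
      assert (U1 := is_lim_unique _ _ _ Lc).
      assert (U2 := is_lim_unique _ _ _ (is_lim_const (i 0) m_infty)).
      rewrite U1 in U2. injection U2; auto. }
    intros t. destruct (OC t) as [A1 A2]. destruct P as [p1 p2]; simpl in *.
    rewrite A1, A2, Hi0, P1. auto.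
Qed.

Theorem theorem4p9 (f0 f1 f2 : R -> R) (b1 b2 : R) :
  smooth_on_nonneg f0 -> smooth_on_nonneg f1 -> smooth_on_nonneg f2 ->
  f_compatible f0 f1 f2 b1 b2 ->
  ~ periodic_solution_in f0 f1 f2 (in_int_T b1 b2) /\
  ~ homoclinic_loop_in f0 f1 f2 (in_int_T b1 b2) /\
  ~ oriented_phase_polygon_in f0 f1 f2 (in_int_T b1 b2).
Proof.
  intros [G0 [HG0 E0]] [G1 [HG1 E1]] [G2 [HG2 E2]] [Hb [Hl Hh]].
  assert (D0 : forall y, ex_derive G0 y) by (intros y; exact (HG0 1%nat y)).
  assert (D1 : forall y, ex_derive G1 y) by (intros y; exact (HG1 1%nat y)).
  assert (D2 : forall y, ex_derive G2 y) by (intros y; exact (HG2 1%nat y)).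
  unfold lam in Hl.
  assert (Hcomp : compatI f0 f1 f2 b1 b2).
  { intros I HI. destruct (Hh I) as [A B]; [lra|].
    unfold hf, Pf, lam in A, B.
    destruct (Req_EM_T I 1) as [e|_]; [lra|]. split; auto. }
  split; [|split].
  -
    intros [x [i [T [Hsol [HT [Hper [Hne Hin]]]]]]].
    assert (HJ : forall t, Jp b1 b2 (i t)).
    { apply (Jp_periodic b1 b2 f0 f1 f2 x i T); auto. intros t; apply (Hper t). }
    set (c := i 0).
    assert (Hc : Jp b1 b2 c) by apply HJ.
    set (phi := fun t => Vf b1 b2 G0 G1 G2 c (x t) (i t)).
    assert (Hd := phi_deriv b1 b2 f0 f1 f2 G0 G1 G2 x i c D0 D1 D2 E0 E1 E2 Hb Hl Hcomp Hsol Hin HJ Hc).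
    assert (Hmono : forall s t, s <= t -> phi s <= phi t).
    { apply (nondecr_of_deriv phi (fun t => (x t - 1) * i t * Dfun b1 b2 (f0 (i t)) (f1 (i t)) (f2 (i t)) (x t) (i t)));
      [intros t; exact (proj1 (Hd t)) | intros t; exact (proj1 (proj2 (Hd t)))]. }
    assert (HpP : forall t, phi (t + T) = phi t).
    { intros t. unfold phi. destruct (Hper t) as [A B]. rewrite A, B. auto. }
    assert (Hconst : forall t, phi t = phi 0).
    { intros t. destruct (INR_unbounded (Rabs t / T)) as [n Hn].
      assert (HnT : Rabs t < INR n * T).
      { apply (Rmult_lt_compat_r T) in Hn; auto. replace (Rabs t / T * T) with (Rabs t) in Hn by (field; lra). lra. }
      assert (PN := per_nat phi T HpP n).
      destruct (Rle_dec 0 t) as [Ht|Ht].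
      - rewrite Rabs_right in HnT by lra.
        assert (phi 0 <= phi t) by (apply Hmono; lra).
        assert (phi t <= phi (0 + INR n * T)) by (apply Hmono; lra).
        rewrite PN in H0. lra.
      - rewrite Rabs_left in HnT by lra.
        assert (phi t <= phi 0) by (apply Hmono; lra).
        assert (phi 0 <= phi (t + INR n * T)) by (apply Hmono; lra).
        rewrite PN in H0. lra. }
    assert (OC := orbit_const b1 b2 f0 f1 f2 G0 G1 G2 x i c D0 D1 D2 E0 E1 E2 Hb Hl Hcomp Hsol Hin HJ Hc Hconst).
    destruct Hne as [t Ht]. apply Ht. destruct (OC t) as [A B]. destruct (OC 0) as [A' _].
    rewrite A, B, A'. auto.
  -
    intros [P [x [i [HeP [Hsol [Hcon [Hne [HP Hin]]]]]]]].
    destruct (equil_int b1 b2 f0 f1 f2 P Hb HeP HP) as [_ [JP _]].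
    destruct (orbit_between b1 b2 f0 f1 f2 G0 G1 G2 x i (snd P) P P D0 D1 D2 E0 E1 E2 Hb Hl Hcomp JP
                HeP HP HeP HP Hsol Hin Hcon) as [_ H].
    destruct Hne as [t Ht]. apply Ht. apply H. reflexivity.
  -
    intros [n [p [xs [is_ [Hn [Hpn [Hinj Hk]]]]]]].
    assert (HP : forall k, (k <= n)%nat -> is_equilibrium f0 f1 f2 (p k) /\ in_int_T b1 b2 (p k)).
    { intros k Hkn. destruct (Nat.eq_dec k n) as [->|Hne].
      - rewrite Hpn. destruct (Hk 0%nat) as [A [B _]]; [lia|]. auto.
      - destruct (Hk k) as [A [B _]]; [lia|]. auto. }
    destruct (HP 0%nat) as [He0 Hi0]; [lia|].
    destruct (equil_int b1 b2 f0 f1 f2 (p 0%nat) Hb He0 Hi0) as [_ [J0 _]].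
    set (c := snd (p 0%nat)).
    set (V := fun q : R * R => Vf b1 b2 G0 G1 G2 c (fst q) (snd q)).
    assert (Step : forall k, (k < n)%nat ->
      V (p k) <= V (p (S k)) /\ (V (p k) = V (p (S k)) -> forall t, (xs k t, is_ k t) = p k)).
    { intros k Hkn. destruct (Hk k Hkn) as [A [B [C [D [E F]]]]].
      destruct (HP k) as [Ae Ai]; [lia|]. destruct (HP (S k)) as [Be Bi]; [lia|].
      apply (orbit_between b1 b2 f0 f1 f2 G0 G1 G2 (xs k) (is_ k) c (p k) (p (S k)));
        auto. }
    assert (Chain : forall k, (1 <= k <= n)%nat -> V (p 1%nat) <= V (p k)).
    { intros k. induction k as [|k IH]; intros Hkk; [lia|].
      destruct (Nat.eq_dec k 0) as [->|Hk0]; [lra|].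
      assert (V (p 1%nat) <= V (p k)) by (apply IH; lia).
      destruct (Step k) as [S1 _]; [lia|]. lra. }
    assert (C1 : V (p 1%nat) <= V (p n)) by (apply Chain; lia).
    rewrite Hpn in C1.
    destruct (Step 0%nat) as [S1 S2]; [lia|].
    assert (Heq : V (p 0%nat) = V (p 1%nat)) by lra.
    destruct (Hk 0%nat) as [_ [_ [_ [_ [[t Ht] _]]]]]; [lia|].
    apply Ht. apply S2. exact Heq.
Qed.
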